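(* A labeled finite-state automaton $\mathcal{S}=(Q,E,\delta,Q_0,\Sigma,\ell)$ is initial-state opaque with respect to $Q_S\subset Q$ if and only if $Q_0\ne\emptyset \implies Q_0\not\subset Q_S$ and, for every $q_0\in Q_0\cap Q_S$, in the concurrent composition $\mathrm{CC}(\mathcal{S}_{\varepsilon},\mathcal{S}_{\mathrm{obs}}^{\varepsilon})$ all states reachable from $(q_0,\mathrm{UR}(Q_0\setminus Q_S))$ are of the form $(-,x)$ with $x\ne\emptyset$.
   Context: A labeled finite-state automaton (LFSA) $\mathcal{S}=(Q,E,\delta,Q_0,\Sigma,\ell)$ has finite state set $Q$, finite event alphabet $E$, transition relation $\delta\subset Q\times E\times Q$ (extended to event sequences), initial states $Q_0\subset Q$, output alphabet $\Sigma$, and labeling $\ell:E\to\Sigma\cup\{\epsilon\}$ (extended to sequences). Observable events $E_o=\{e:\ell(e)\in\Sigma\}$, unobservable events $E_{uo}=\{e:\ell(e)=\epsilon\}$. For $x\subset Q$, the unobservable reach is $\mathrm{UR}(x)=\bigcup_{q\in x}\bigcup_{s\in E_{uo}^*}\delta(q,s)$. $\mathcal{S}$ is initial-state opaque (ISO) with respect to secret states $Q_S\subset Q$ if for every run $q_0\xrightarrow{s}q$ with $q_0\in Q_0\cap Q_S$ there is a run $q_0'\xrightarrow{s'}q'$ with $q_0'\in Q_0\setminus Q_S$ and $\ell(s)=\ell(s')$. The observer $\mathcal{S}_{\mathrm{obs}}$ is the deterministic automaton with state set $2^Q$, alphabet $\ell(E_o)$, initial state $\mathrm{UR}(Q_0)$,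 and transitions $\delta_{\mathrm{obs}}(x,a)=\bigcup_{q\in x}\bigcup_{e_a\in E_o,\ell(e_a)=a,\ s\in E_{uo}^*}\delta(q,e_as)$ (so $\delta_{\mathrm{obs}}(\emptyset,a)=\emptyset$). $\mathcal{S}_{\varepsilon}$ is obtained from $\mathcal{S}$ by relabeling each transition $q\xrightarrow{e}q'$ as $q\xrightarrow{\ell(e)}q'$ if $e\in E_o$ and as $q\xrightarrow{\varepsilon}q'$ if $e\in E_{uo}$, with labeling $\ell'$ on $\ell(E_o)\cup\{\varepsilon\}$ being the identity on $\ell(E_o)$ and $\ell'(\varepsilon)=\epsilon$. $\mathcal{S}_{\mathrm{obs}}^{\varepsilon}$ is $\mathcal{S}_{\mathrm{obs}}$ with the additional (unused) event $\varepsilon$ and labeling $\ell'$. The concurrent composition $\mathrm{CC}(\mathcal{S}^1,\mathcal{S}^2)$ of two LFSAs $\mathcal{S}^i=(Q_i,E,\delta_i,Q_{0i},\Sigma,\ell)$ has states $Q_1\times Q_2$, initial states $Q_{01}\times Q_{02}$, and transitions: $((q_1,q_1'),(e,e'),(q_2,q_2'))$ for observable $e,e'$ with $\ell(e)=\ell(e')$, $(q_1,e,q_2)\in\delta_1$, $(q_1',e',q_2')\in\delta_2$; $((q_1,q_1'),(e,\epsilon),(q_2,q_1'))$ for unobservable $e$ with $(q_1,e,q_2)\in\delta_1$; and $((q_1,q_1'),(\epsilon,e),(q_1,q_2'))$ for unobservable $e$ with $(q_1',e,q_2')\in\delta_2$. Observable transitions with the same label are synchronized, unobservable ones interleave. 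*)

(* Defs.v *)
From mathcomp Require Import all_boot.
Set Implicit Arguments. Unset Strict Implicit. Unset Printing Implicit Defensive.

(* An LFSA (Q, E, delta, Q0, Sigma, ell) is given by its components:
   Q E Sigma : finType, delta : Q -> E -> Q -> bool (transition relation),
   Q0 : {set Q}, ell : E -> option Sigma  (None stands for the empty word,
   i.e. ell e = None  <->  e is unobservable). *)

Section LFSA.
Variables (Sigma Q E : finType).

Fixpoint run (delta : Q -> E -> Q -> bool) (q : Q) (s : seq E) (q' : Q) : Prop :=
  match s with
  | [::] => q = q'
  | e :: s' => exists q1, delta q e q1 /\ run delta q1 s' q'
  end.

Definition lab_seq (ell : E -> option Sigma) (s : seq E) : seq Sigma := pmap ell s.

Definition ISO (delta : Q -> E -> Q -> bool) (Q0 QS : {set Q})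
  (ell : E -> option Sigma) : Prop :=
  forall q0 s q, q0 \in Q0 :&: QS -> run delta q0 s q ->
    exists q0' s' q', q0' \in Q0 :\: QS /\ run delta q0' s' q' /\
                      lab_seq ell s = lab_seq ell s'.

Variables (delta : Q -> E -> Q -> bool) (ell : E -> option Sigma).

Definition uo_step : rel Q := fun q q' => [exists e, (ell e == None) && delta q e q'].

Definition UR (x : {set Q}) : {set Q} :=
  [set q' | [exists q in x, connect uo_step q q']].

Definition obs_trans (x : {set Q}) (a : Sigma) : {set Q} :=
  [set q' | [exists q in x, [exists e, [exists q1,
     [&& ell e == Some a, delta q e q1 & connect uo_step q1 q']]]]].

(* S_eps: states Q, events option Sigma (None = varepsilon), labeling id. *)
Definition eps_trans (q : Q) (a : option Sigma) (q' : Q) : bool :=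
  [exists e, (ell e == a) && delta q e q'].

(* S_obs^eps: states {set Q}, events option Sigma, varepsilon unused,
   labeling id. *)
Definition obs_eps_trans (x : {set Q}) (a : option Sigma) (y : {set Q}) : bool :=
  if a is Some b then y == obs_trans x b else false.

End LFSA.

(* Concurrent composition of two LFSAs over the same events E and labeling ell.
   Events of CC are pairs (e,e'), (e,eps), (eps,e) encoded in option E * option E. *)
Definition CC_trans (Sigma Q1 Q2 E : finType) (d1 : Q1 -> E -> Q1 -> bool)
  (d2 : Q2 -> E -> Q2 -> bool) (ell : E -> option Sigma)
  (p : Q1 * Q2) (ev : option E * option E) (p' : Q1 * Q2) : bool :=
  match ev with
  | (Some e, Some e') =>
      [&& ell e != None, ell e == ell e', d1 p.1 e p'.1 & d2 p.2 e' p'.2]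
  | (Some e, None) => [&& ell e == None, d1 p.1 e p'.1 & p'.2 == p.2]
  | (None, Some e) => [&& ell e == None, p'.1 == p.1 & d2 p.2 e p'.2]
  | (None, None) => false
  end.

Lemma uo_connectP (Sigma Q E : finType) (delta : Q -> E -> Q -> bool)
  (ell : E -> option Sigma) (q q' : Q) :
  connect (uo_step delta ell) q q' <->
  exists s, all (fun e => ell e == None) s /\ run delta q s q'.
Proof.
split.
- case/connectP=> p; elim: p q => [|q1 p IH] q /=.
    by move=> _ ->; exists [::].
  case/andP=> /existsP[e /andP[He Hd]] Hp Hl.
  have [s [Hs Hr]] := IH q1 Hp Hl.
  by exists (e :: s); split; [rewrite /= He | exists q1].
- case=> s []; elim: s q => [|e s IH] q /=; first by move=> _ ->.
  case/andP=> He Hs [q1 [Hd Hr]].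
  apply: connect_trans (IH q1 Hs Hr).
  by apply: connect1; apply/existsP; exists e; rewrite He.
Qed.

(* Main.v *)
Require Import Defs.
From mathcomp Require Import all_boot.
Set Implicit Arguments.
Unset Strict Implicit.

Lemma run_cat (Q E : finType) (d : Q -> E -> Q -> bool) u v q m q' :
  run d q u m -> run d m v q' -> run d q (u ++ v) q'.
Proof.
elim: u q => [|e u IH] q /=; first by move=> ->.
by case=> q1 [H1 H2] Hv; exists q1; split=> //; apply: IH H2 Hv.
Qed.

Lemma lab_uo (Sigma E : finType) (ell : E -> option Sigma) s :
  all (fun e => ell e == None) s -> lab_seq ell s = [::].
Proof.
rewrite /lab_seq; elim: s => [|e s IH] //= /andP[/eqP -> /IH ->] //.
Qed.

Lemma lab_cons (Sigma E : finType) (ell : E -> option Sigma) e s :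
  lab_seq ell (e :: s) =
  if ell e is Some a then a :: lab_seq ell s else lab_seq ell s.
Proof. by []. Qed.

Lemma lab_cat (Sigma E : finType) (ell : E -> option Sigma) u v :
  lab_seq ell (u ++ v) = lab_seq ell u ++ lab_seq ell v.
Proof. by rewrite /lab_seq pmap_cat. Qed.

Lemma L1 (Sigma Q E : finType) (delta : Q -> E -> Q -> bool)
  (ell : E -> option Sigma) w (x : {set Q}) q' :
  q' \in foldl (obs_trans delta ell) x w ->
  exists q s, q \in x /\ run delta q s q' /\ lab_seq ell s = w.
Proof.
elim: w x => [|a w IH] x /=; first by move=> H; exists q', [::].
case/IH=> q1 [s [Hq1 [Hr Hl]]].
move: Hq1; rewrite inE => /existsP[q /andP[Hq /existsP[e /existsP[qe]]]].
case/and3P=> /eqP He Hd /uo_connectP[u [Hu Hru]].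
exists q, (e :: u ++ s); split=> //; split.
  by exists qe; split=> //; apply: run_cat Hru Hr.
by rewrite lab_cons He lab_cat lab_uo // Hl.
Qed.

Lemma L2 (Sigma Q E : finType) (delta : Q -> E -> Q -> bool)
  (ell : E -> option Sigma) s (x : {set Q}) q q' :
  q \in x -> (forall a b, a \in x -> uo_step delta ell a b -> b \in x) ->
  run delta q s q' -> q' \in foldl (obs_trans delta ell) x (lab_seq ell s).
Proof.
elim: s x q => [|e s IH] x q; first by move=> Hq _ <-.
move=> Hq Hcl [q1 [Hd Hr]].
rewrite lab_cons; case He: (ell e) => [a|] /=.
  apply: IH Hr.
    rewrite inE; apply/existsP; exists q; rewrite Hq /=.
    by apply/existsP; exists e; apply/existsP; exists q1; rewrite He eqxx Hd connect0.
  move=> b c; rewrite !inE => /existsP[q2 /andP[Hq2 /existsP[e2 /existsP[q3]]]].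
  case/and3P=> H1 H2 H3 Hs; apply/existsP; exists q2; rewrite Hq2 /=.
  apply/existsP; exists e2; apply/existsP; exists q3; rewrite H1 H2 /=.
  by apply: connect_trans H3 (connect1 Hs).
apply: IH Hr => //; apply: Hcl Hq _.
by apply/existsP; exists e; rewrite He eqxx Hd.
Qed.

Lemma CC_fwd (Sigma Q E : finType) (delta : Q -> E -> Q -> bool)
  (ell : E -> option Sigma) sc q (x : {set Q}) p :
  run (CC_trans (eps_trans delta ell) (obs_eps_trans delta ell) id) (q, x) sc p ->
  exists s, run delta q s p.1 /\ p.2 = foldl (obs_trans delta ell) x (lab_seq ell s).
Proof.
elim: sc q x => [|ev sc IH] q x /=; first by move=> <-; exists [::].
case=> [[q1 x1] [Ht Hr]].
have [s [Hs Hp]] := IH _ _ Hr.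
move: Ht; case: ev => [[e|] [e'|]] //=.
- case: e => [b|] //; case/and4P=> _ /eqP <- /existsP[E0 /andP[/eqP HE0 Hd]].
  rewrite /obs_eps_trans => /eqP Hx1.
  exists (E0 :: s); split; first by exists q1.
  by rewrite lab_cons HE0 /= -Hx1.
- case/and3P=> /eqP -> /existsP[E0 /andP[/eqP HE0 Hd]] /eqP /= Hx1.
  exists (E0 :: s); split; first by exists q1.
  by rewrite lab_cons HE0 -Hx1.
- by case/and3P=> /eqP -> _.
Qed.

Lemma CC_bwd (Sigma Q E : finType) (delta : Q -> E -> Q -> bool)
  (ell : E -> option Sigma) s q (x : {set Q}) q' :
  run delta q s q' ->
  exists sc, run (CC_trans (eps_trans delta ell) (obs_eps_trans delta ell) id)
    (q, x) sc (q', foldl (obs_trans delta ell) x (lab_seq ell s)).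
Proof.
elim: s q x => [|e s IH] q x; first by move=> /= ->; exists [::].
case=> q1 [Hd Hr]; rewrite lab_cons.
case He: (ell e) => [a|] /=.
  have [sc Hsc] := IH q1 (obs_trans delta ell x a) Hr.
  exists ((Some (Some a), Some (Some a)) :: sc); exists (q1, obs_trans delta ell x a).
  split=> //=; rewrite eqxx /=; apply/andP; split.
    by apply/existsP; exists e; rewrite He eqxx Hd.
  by rewrite /obs_eps_trans eqxx.
have [sc Hsc] := IH q1 x Hr.
exists ((Some None, None) :: sc); exists (q1, x); split=> //=.
rewrite eqxx /= andbT; apply/existsP; exists e; by rewrite He eqxx Hd.
Qed.

Unset Implicit Arguments.
Theorem theorem5 (Sigma Q E : finType) (delta : Q -> E -> Q -> bool)
  (Q0 QS : {set Q}) (ell : E -> option Sigma) :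
  ISO delta Q0 QS ell <->
  ((Q0 != set0 -> ~~ (Q0 \subset QS)) /\
   forall q0, q0 \in Q0 :&: QS ->
   forall (s : seq (option (option Sigma) * option (option Sigma)))
          (p : Q * {set Q}),
     run (CC_trans (eps_trans delta ell) (obs_eps_trans delta ell) id)
         (q0, UR delta ell (Q0 :\: QS)) s p ->
     p.2 != set0).
Proof.
have URcl : forall a b, a \in UR delta ell (Q0 :\: QS) -> uo_step delta ell a b ->
    b \in UR delta ell (Q0 :\: QS).
  move=> a b; rewrite !inE => /existsP[q /andP[Hq Hc]] Hs.
  by apply/existsP; exists q; rewrite Hq (connect_trans Hc (connect1 Hs)).
split.
- move=> Hiso; split.
    move=> /set0Pn[q Hq]; apply/negP => Hsub.
    have Hq' : q \in Q0 :&: QS by rewrite inE Hq (subsetP Hsub).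
    have [q0' [s' [q' [Hin _]]]] := Hiso q [::] q Hq' erefl.
    by move: Hin; rewrite inE => /andP[/negP HQS /(subsetP Hsub)].
  move=> q0 Hq0 sc p Hr.
  have [s [Hs Hp]] := CC_fwd Hr.
  have [q0' [s' [q' [Hin [Hr' Hl]]]]] := Hiso _ _ _ Hq0 Hs.
  apply/set0Pn; exists q'; rewrite Hp Hl.
  apply: L2 Hr' => //; rewrite inE; apply/existsP; exists q0'; by rewrite Hin connect0.
- case=> _ H q0 s q Hq0 Hr.
  have [sc Hsc] := CC_bwd ell (UR delta ell (Q0 :\: QS)) Hr.
  have /set0Pn[q' Hq'] := H q0 Hq0 _ _ Hsc.
  have [q1 [s1 [Hq1 [Hr1 Hl1]]]] := L1 Hq'.
  move: Hq1; rewrite inE => /existsP[q2 /andP[Hq2 /uo_connectP[u [Hu Hru]]]].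
  exists q2, (u ++ s1), q'; split=> //; split; first by apply: run_cat Hru Hr1.
  by rewrite lab_cat (lab_uo Hu) Hl1.
Qed.
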